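(* For every $\rho<0$, the harmonic map $\psi_\rho:\mathbb{CP}^n\to\mathbb{CP}^n$ is equivariantly weakly stable with respect to the $\mathrm{SU}(p+1)\times\mathrm{SU}(n-p)$-action, i.e. every $\lambda$ in its equivariant spectrum satisfies $\lambda\ge0$.
   Context: Let $n\ge1$ and $0\le p<n$ be integers. $\mathbb{CP}^n$ carries the Fubini–Study metric (the metric making $\mathbb S^{2n+1}\to\mathbb{CP}^n$ a Riemannian submersion). $G=\mathrm{SU}(p+1)\times\mathrm{SU}(n-p)$ acts isometrically by $(A,B)\cdot[Z]=[\operatorname{diag}(A,B)Z]$; with $\gamma(t)=[\cos t\,e_1+\sin t\,e_{p+2}]$ every point of $\mathbb{CP}^n$ is $g\cdot\gamma(t)$ for some $g\in G$, $t\in[0,\pi/2]$. For $\rho\ne0$ let $r_\rho(t)=\arctan(\rho\tan t)$ on $[0,\pi/2)$, $r_\rho(\pi/2)=\operatorname{sign}(\rho)\pi/2$, and $\psi_\rho(g\cdot\gamma(t))=g\cdot\gamma(r_\rho(t))$, a harmonic map. The equivariant spectrum of $\psi_\rho$ is the set of $\lambda\in\mathbb R$ for which the Sturm–Liouville problem \[ \ddot\xi+\big[(2n-2p-1)\cot t-(2p+1)\tan t\big]\dot\xi-\Big[2(n-p-1)\frac{\cos 2r_\rho(t)}{\sin^2t}-2p\frac{\cos2r_\rho(t)}{\cos^2t}+4\frac{\cos4r_\rho(t)}{\sin^22t}\Big]\xi+\lambda\xi=0 \] has a nonzero solution $\xi\in C^\infty_0([0,\tfrac\pi2])$ (smooth,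 vanishing at $0$ and $\pi/2$). $\psi_\rho$ is equivariantly weakly stable if all these $\lambda$ are $\ge0$. *)

(* Defs.v *)
From Stdlib Require Import Reals.
From Coquelicot Require Import Coquelicot.
Open Scope R_scope.

Definition r_rho (rho t : R) : R :=
  if Req_EM_T t (PI / 2) then (if Rlt_dec 0 rho then PI / 2 else - (PI / 2))
  else atan (rho * tan t).

Definition smooth (f : R -> R) : Prop := forall (k : nat) (x : R), ex_derive_n f k x.

(* C^infty_0([0, pi/2]): (restriction of) a smooth function vanishing at 0 and pi/2 *)
Definition C_inf_0 (xi : R -> R) : Prop :=
  smooth xi /\ xi 0 = 0 /\ xi (PI / 2) = 0.

Definition SL_eq (n p : nat) (rho lam : R) (xi : R -> R) (t : R) : Prop :=
  let r := r_rho rho t in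
  Derive_n xi 2 t
  + ((2 * INR n - 2 * INR p - 1) * (cos t / sin t) - (2 * INR p + 1) * tan t) * Derive xi t
  - (2 * (INR n - INR p - 1) * cos (2 * r) / (sin t) ^ 2
     - 2 * INR p * cos (2 * r) / (cos t) ^ 2
     + 4 * cos (4 * r) / (sin (2 * t)) ^ 2) * xi t
  + lam * xi t = 0.

Definition equiv_spectrum (n p : nat) (rho lam : R) : Prop :=
  exists xi : R -> R,
    C_inf_0 xi /\
    (exists t, 0 <= t <= PI / 2 /\ xi t <> 0) /\
    (forall t, 0 < t < PI / 2 -> SL_eq n p rho lam xi t).

Definition equiv_weakly_stable (n p : nat) (rho : R) : Prop :=
  forall lam, equiv_spectrum n p rho lam -> 0 <= lam.

(* Main.v *)
Require Import Defs.
From Stdlib Require Import Reals Lra Lia Psatz.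
From Coquelicot Require Import Coquelicot.
Open Scope R_scope.

Definition c2 (rho t : R) : R :=
  (cos t ^ 2 - rho ^ 2 * sin t ^ 2) / (cos t ^ 2 + rho ^ 2 * sin t ^ 2).

Lemma cos2atan x : cos (2 * atan x) = (1 - x ^ 2) / (1 + x ^ 2).
Proof.
  rewrite cos_2a, cos_atan, sin_atan.
  assert (H : 0 < 1 + x²) by (unfold Rsqr; nra).
  assert (Hs : sqrt (1 + x²) * sqrt (1 + x²) = 1 + x²) by (apply sqrt_sqrt; lra).
  assert (Hs0 : sqrt (1 + x²) <> 0) by (apply Rgt_not_eq, sqrt_lt_R0; lra).
  unfold Rsqr in *. set (q := sqrt (1 + x * x)) in *.
  replace (1 + x ^ 2) with (q * q) by (rewrite Hs; ring).
  field. exact Hs0.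
Qed.

Lemma interior_SC t : 0 < t < PI / 2 -> 0 < sin t /\ 0 < cos t.
Proof.
  intros [h1 h2]. split.
  - apply sin_gt_0; lra.
  - apply cos_gt_0; lra.
Qed.

Lemma cos2r rho t : 0 < t < PI / 2 -> cos (2 * r_rho rho t) = c2 rho t.
Proof.
  intros Ht. destruct (interior_SC t Ht) as [HS HC].
  unfold r_rho. destruct (Req_EM_T t (PI/2)) as [e|_]; [lra|].
  rewrite cos2atan. unfold c2, tan.
  assert (0 < cos t ^ 2 + rho ^ 2 * sin t ^ 2) by nra.
  field. split; [lra|]. intro E. field_simplify in E. all: nra.
Qed.

Lemma pow_pred_mul x m : INR m * x ^ Init.Nat.pred m * x = INR m * x ^ m.
Proof. destruct m; simpl; ring. Qed.

Lemma d_sinpow m t : sin t <> 0 ->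
  is_derive (fun t => sin t ^ m) t (INR m * sin t ^ m * cos t / sin t).
Proof.
  intro H.
  replace (INR m * sin t ^ m * cos t / sin t) with (INR m * cos t * sin t ^ Init.Nat.pred m).
  - apply is_derive_pow, is_derive_sin.
  - destruct m; [simpl; field; exact H|]. cbn [Init.Nat.pred pow]. field. exact H.
Qed.

Lemma d_cospow m t : cos t <> 0 ->
  is_derive (fun t => cos t ^ m) t (- INR m * cos t ^ m * sin t / cos t).
Proof.
  intro H.
  replace (- INR m * cos t ^ m * sin t / cos t) with (INR m * (- sin t) * cos t ^ Init.Nat.pred m).
  - apply is_derive_pow, is_derive_cos.
  - destruct m; [simpl; field; exact H|]. cbn [Init.Nat.pred pow]. field. exact H.
Qed.

Lemma d_c2 rho t : 0 < t < PI / 2 ->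
  is_derive (c2 rho) t ((c2 rho t ^ 2 - 1) / (sin t * cos t)).
Proof.
  intros Ht. destruct (interior_SC t Ht) as [HS HC].
  assert (HD : 0 < cos t ^ 2 + rho ^ 2 * sin t ^ 2) by nra.
  unfold c2. auto_derive.
  - lra.
  - assert (E : sin t ^ 2 + cos t ^ 2 = 1) by (rewrite <- (sin2_cos2 t); unfold Rsqr; ring).
    transitivity (-4 * rho ^ 2 * sin t * cos t * (sin t ^ 2 + cos t ^ 2) / (cos t ^ 2 + rho ^ 2 * sin t ^ 2) ^ 2).
    + field. lra.
    + rewrite E. field. split; lra.
Qed.

Definition wf (k p : nat) (t : R) := sin t ^ (2 * k + 1) * cos t ^ (2 * p + 1).
Definition hf (k p : nat) rho (t : R) := sin t ^ (2 * k) * cos t ^ (2 * p) * c2 rho t.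
Definition FF (k p : nat) rho (xi : R -> R) (t : R) :=
  wf k p t * xi t * Derive xi t - hf k p rho t * xi t ^ 2.

Lemma is_derive_eq' (f : R -> R) x l l' : is_derive f x l -> l = l' -> is_derive f x l'.
Proof. intros H ->; exact H. Qed.

Lemma dmin (f g : R -> R) x a b : is_derive f x a -> is_derive g x b ->
  is_derive (fun t => f t - g t) x (a - b).
Proof. intros; apply (is_derive_minus f g); auto. Qed.
Lemma dmul (f g : R -> R) x a b : is_derive f x a -> is_derive g x b ->
  is_derive (fun t => f t * g t) x (a * g x + f x * b).
Proof. intros Ha Hb. apply (is_derive_mult f g x a b Ha Hb). intros; apply Rmult_comm. Qed.

Lemma dF n p k rho lam xi t : n = (k + p + 1)%nat -> 0 < t < PI / 2 ->
  ex_derive xi t -> ex_derive (Derive xi) t -> SL_eq n p rho lam xi t ->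
  is_derive (FF k p rho xi) t
    (- lam * wf k p t * xi t ^ 2
     + wf k p t * (Derive xi t - c2 rho t * xi t / (sin t * cos t)) ^ 2).
Proof.
  intros En Ht E1 E2 SL.
  destruct (interior_SC t Ht) as [HS HC].
  apply Derive_correct in E1. apply Derive_correct in E2.
  unfold FF, wf, hf.
  eapply is_derive_eq'.
  { apply dmin.
    - apply dmul; [|exact E2].
      apply dmul; [|exact E1].
      apply dmul; [apply d_sinpow; lra|apply d_cospow; lra].
    - apply dmul; [|apply is_derive_pow; exact E1].
      apply dmul; [|apply d_c2; exact Ht].
      apply dmul; [apply d_sinpow; lra|apply d_cospow; lra]. }
  unfold SL_eq in SL. change (Derive_n xi 2 t) with (Derive (Derive xi) t) in SL.
  rewrite cos2r in SL by exact Ht.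
  replace (4 * r_rho rho t) with (2 * (2 * r_rho rho t)) in SL by ring.
  rewrite cos_2a_cos, cos2r in SL by exact Ht.
  rewrite sin_2a in SL. unfold tan in SL.
  rewrite En in SL. rewrite !plus_INR in SL. rewrite !plus_INR, !mult_INR. simpl INR in SL |- *.
  rewrite !pow_add, !pow_1.
  set (D2 := Derive (Derive xi) t) in *.
  set (D1 := Derive xi t) in *.
  set (X := xi t) in *. set (S := sin t) in *. set (C := cos t) in *.
  set (A := S ^ (2 * k)) in *. set (B := C ^ (2 * p)) in *.
  set (c := c2 rho t) in *.
    assert (HD2 : D2 = - ((2 * (INR k + INR p + 1) - 2 * INR p - 1) * (C / S) - (2 * INR p + 1) * (S / C)) * D1
     + (2 * (INR k + INR p + 1 - INR p - 1) * c / S ^ 2 - 2 * INR p * c / C ^ 2 + 4 * (2 * c * c - 1) / (2 * S * C) ^ 2) * X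
     - lam * X) by lra.
  rewrite HD2. match goal with |- ?a = ?b => change (@eq R a b) end. field. split; lra.
Qed.

Lemma pow_01 x m : 0 <= x <= 1 -> 0 <= x ^ m <= 1.
Proof.
  intros H. split. apply pow_le; lra.
  rewrite <- (pow1 m). apply pow_incr; lra.
Qed.

Lemma c2_bound rho t : Rabs (c2 rho t) <= 1.
Proof.
  unfold c2.
  assert (0 <= rho ^ 2 * sin t ^ 2) by (apply Rmult_le_pos; apply pow2_ge_0).
  assert (0 <= cos t ^ 2) by (apply pow2_ge_0).
  destruct (Req_dec (cos t ^ 2 + rho ^ 2 * sin t ^ 2) 0) as [E|E].
  - rewrite E. unfold Rdiv. rewrite Rinv_0, Rmult_0_r, Rabs_R0. lra.
  - assert (Hd: 0 < cos t ^ 2 + rho ^ 2 * sin t ^ 2) by lra.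
    apply Rabs_le. split.
    * apply (Rmult_le_reg_r (cos t ^ 2 + rho ^ 2 * sin t ^ 2)); [exact Hd|].
      unfold Rdiv. rewrite Rmult_assoc, Rinv_l by lra. nra.
    * apply (Rmult_le_reg_r (cos t ^ 2 + rho ^ 2 * sin t ^ 2)); [exact Hd|].
      unfold Rdiv. rewrite Rmult_assoc, Rinv_l by lra. nra.
Qed.

Lemma FF_bound k p rho xi t M : 0 < t < PI / 2 -> Rabs (Derive xi t) <= M ->
  Rabs (FF k p rho xi t) <= Rabs (xi t) * M + xi t ^ 2.
Proof.
  intros Ht HM. destruct (interior_SC t Ht) as [HS HC].
  pose proof (SIN_bound t). pose proof (COS_bound t).
  unfold FF, wf, hf.
  pose proof (pow_01 (sin t) (2*k+1)) as P1. pose proof (pow_01 (cos t) (2*p+1)) as P2.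
  pose proof (pow_01 (sin t) (2*k)) as P3. pose proof (pow_01 (cos t) (2*p)) as P4.
  pose proof (c2_bound rho t) as Pc.
  set (a := sin t ^ (2 * k + 1)) in *. set (b := cos t ^ (2 * p + 1)) in *.
  set (a' := sin t ^ (2 * k)) in *. set (b' := cos t ^ (2 * p)) in *.
  set (c := c2 rho t) in *.
  assert (E1 : 0 <= a * b <= 1) by (split; nra).
  assert (E2 : Rabs (a' * b' * c) <= 1).
  { rewrite !Rabs_mult. rewrite (Rabs_right a') by lra. rewrite (Rabs_right b') by lra.
    assert (0 <= a'*b' <= 1) by (split; nra).
    pose proof (Rabs_pos c). nra. }
  eapply Rle_trans; [apply Rabs_triang_inv2 || apply Rabs_triang|].
  rewrite Rabs_Ropp, !Rabs_mult.
  rewrite (Rabs_right (xi t ^ 2)) by (apply Rle_ge, pow2_ge_0).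
  specialize (P1 ltac:(lra)). specialize (P2 ltac:(lra)). specialize (P3 ltac:(lra)). specialize (P4 ltac:(lra)).
  rewrite (Rabs_right a), (Rabs_right b), (Rabs_right a'), (Rabs_right b') by lra.
  pose proof (Rabs_pos (xi t)). pose proof (Rabs_pos (Derive xi t)).
  pose proof (pow2_ge_0 (xi t)). pose proof (Rabs_pos c).
  assert (a * b * Rabs (xi t) * Rabs (Derive xi t) <= Rabs (xi t) * M).
  { assert (a * b * Rabs (Derive xi t) <= M) by nra. nra. }
  assert (0 <= a' * b' <= 1) by (split; nra).
  assert (a' * b' * Rabs c <= 1) by nra.
  assert (a' * b' * Rabs c * xi t ^ 2 <= xi t ^ 2) by nra.
  lra.
Qed.

Lemma cont_of_deriv (f:R->R) x : ex_derive f x -> continuity_pt f x.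
Proof. intro H. apply continuity_pt_filterlim. exact (ex_derive_continuous f x H). Qed.

Theorem theorem6p2 (n p : nat) (hn : (1 <= n)%nat) (hp : (p < n)%nat)
  (rho : R) (hrho : rho < 0) :
  equiv_weakly_stable n p rho.
Proof.
  intros lam [xi [[Hsm [H0 Hpi]] [[t0 [Ht0 Hx0]] HSL]]].
  destruct (Rle_or_lt 0 lam) as [|Hl]; [assumption|exfalso].
  pose proof PI_RGT_0 as HPI.
  set (k := (n - p - 1)%nat). assert (En : n = (k + p + 1)%nat) by (unfold k; lia).
  assert (D1 : forall x, ex_derive xi x) by (intro x; exact (Hsm 1%nat x)).
  assert (D2 : forall x, ex_derive (Derive xi) x) by (intro x; exact (Hsm 2%nat x)).
  destruct (continuity_ab_maj (fun x => Rabs (Derive xi x)) 0 (PI/2)) as [Mx [HM _]].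
  { lra. }
  { intros c _. apply (continuity_pt_comp (Derive xi) Rabs).
    apply cont_of_deriv, D2. apply Rcontinuity_abs. }
  set (M := Rabs (Derive xi Mx)) in *.
  assert (HM0: 0 <= M) by apply Rabs_pos.
  assert (Xl : forall t, 0 <= t <= PI/2 -> Rabs (xi t) <= M * t).
  { intros t Ht. destruct (MVT_gen xi 0 t (Derive xi)) as [c [Hc Hc2]].
    - intros x _. apply Derive_correct, D1.
    - intros x _. apply cont_of_deriv, D1.
    - rewrite Rmin_left, Rmax_right in Hc by lra. rewrite H0, Rminus_0_r, Rminus_0_r in Hc2.
      rewrite Hc2, Rabs_mult, (Rabs_right t) by lra.
      assert (Rabs (Derive xi c) <= M) by (apply HM; lra).
      apply Rmult_le_compat_r; lra. }
  assert (Xr : forall t, 0 <= t <= PI/2 -> Rabs (xi t) <= M * (PI/2 - t)).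
  { intros t Ht. destruct (MVT_gen xi t (PI/2) (Derive xi)) as [c [Hc Hc2]].
    - intros x _. apply Derive_correct, D1.
    - intros x _. apply cont_of_deriv, D1.
    - rewrite Rmin_left, Rmax_right in Hc by lra. rewrite Hpi in Hc2.
      replace (xi t) with (- (Derive xi c * (PI / 2 - t))) by lra.
      rewrite Rabs_Ropp, Rabs_mult, (Rabs_right (PI/2 - t)) by lra.
      assert (Rabs (Derive xi c) <= M) by (apply HM; lra).
      apply Rmult_le_compat_r; lra. }
  set (F := FF k p rho xi).
  assert (Fl : forall t, 0 < t < PI/2 -> Rabs (F t) <= M*M*t + M*M*(t*t)).
  { intros t Ht. eapply Rle_trans. apply FF_bound. exact Ht. apply HM; lra.
    pose proof (Xl t ltac:(lra)). pose proof (Rabs_pos (xi t)).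
    assert (xi t ^ 2 = Rabs (xi t) * Rabs (xi t)) by (rewrite <- Rabs_mult; simpl; rewrite Rmult_1_r; symmetry; apply Rabs_right; apply Rle_ge, Rle_0_sqr).
    rewrite H2. nra. }
  assert (Fr : forall t, 0 < t < PI/2 -> Rabs (F t) <= M*M*(PI/2-t) + M*M*((PI/2-t)*(PI/2-t))).
  { intros t Ht. eapply Rle_trans. apply FF_bound. exact Ht. apply HM; lra.
    pose proof (Xr t ltac:(lra)). pose proof (Rabs_pos (xi t)).
    assert (xi t ^ 2 = Rabs (xi t) * Rabs (xi t)) by (rewrite <- Rabs_mult; simpl; rewrite Rmult_1_r; symmetry; apply Rabs_right; apply Rle_ge, Rle_0_sqr).
    rewrite H2. nra. }
  assert (dFt : forall t, 0 < t < PI/2 -> is_derive F t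
    (- lam * wf k p t * xi t ^ 2
     + wf k p t * (Derive xi t - c2 rho t * xi t / (sin t * cos t)) ^ 2)).
  { intros t Ht. apply dF with n; auto. }
  assert (wpos : forall t, 0 < t < PI/2 -> 0 < wf k p t).
  { intros t Ht. destruct (interior_SC t Ht). unfold wf. apply Rmult_lt_0_compat; apply pow_lt; lra. }
  assert (Mono : forall a b, 0 < a -> a <= b -> b < PI/2 -> F a <= F b).
  { intros a b Ha Hab Hb.
    destruct (MVT_gen F a b (fun t => - lam * wf k p t * xi t ^ 2
     + wf k p t * (Derive xi t - c2 rho t * xi t / (sin t * cos t)) ^ 2)) as [c [Hc Hc2]].
    - intros x Hx. rewrite Rmin_left, Rmax_right in Hx by lra. apply dFt; lra.
    - intros x Hx. rewrite Rmin_left, Rmax_right in Hx by lra. apply cont_of_deriv.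
      eexists. apply dFt; lra.
    - rewrite Rmin_left, Rmax_right in Hc by lra.
      assert (0 < wf k p c) by (apply wpos; lra).
      pose proof (pow2_ge_0 (xi c)).
      pose proof (pow2_ge_0 (Derive xi c - c2 rho c * xi c / (sin c * cos c))).
      assert (0 <= - lam * wf k p c * xi c ^ 2) by (apply Rmult_le_pos; nra).
      assert (0 <= wf k p c * (Derive xi c - c2 rho c * xi c / (sin c * cos c)) ^ 2) by nra.
      nra. }
  assert (Zero : forall t, 0 < t < PI/2 -> F t = 0).
  { intros t Ht. destruct (Rtotal_order (F t) 0) as [Hn|[He|Hp]]; [exfalso| exact He | exfalso].
    - set (u := Rmin (t/2) (Rmin 1 ((- F t)/(2*M*M+1)))).
      assert (Hu1 : u <= t/2) by apply Rmin_l.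
      assert (Hu2 : u <= 1) by (eapply Rle_trans; [apply Rmin_r|apply Rmin_l]).
      assert (Hu3 : u <= (- F t)/(2*M*M+1)) by (eapply Rle_trans; [apply Rmin_r|apply Rmin_r]).
      assert (Hu0 : 0 < u).
      { unfold u. apply Rmin_glb_lt; [lra|]. apply Rmin_glb_lt; [lra|].
        apply Rdiv_lt_0_compat; nra. }
      assert (Hu4 : u * (2*M*M+1) <= - F t).
      { apply (Rmult_le_compat_r (2*M*M+1)) in Hu3; [|nra].
        replace ((- F t)/(2*M*M+1)*(2*M*M+1)) with (- F t) in Hu3 by (field; nra). lra. }
      pose proof (Fl u ltac:(lra)). pose proof (Mono u t ltac:(lra) ltac:(lra) ltac:(lra)).
      pose proof (Rle_abs (F u)). pose proof (Rabs_maj2 (F u)). nra.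
    - set (u := Rmin ((PI/2 - t)/2) (Rmin 1 (F t/(2*M*M+1)))).
      assert (Hu1 : u <= (PI/2-t)/2) by apply Rmin_l.
      assert (Hu2 : u <= 1) by (eapply Rle_trans; [apply Rmin_r|apply Rmin_l]).
      assert (Hu3 : u <= F t/(2*M*M+1)) by (eapply Rle_trans; [apply Rmin_r|apply Rmin_r]).
      assert (Hu0 : 0 < u).
      { unfold u. apply Rmin_glb_lt; [lra|]. apply Rmin_glb_lt; [lra|].
        apply Rdiv_lt_0_compat; nra. }
      assert (Hu4 : u * (2*M*M+1) <= F t).
      { apply (Rmult_le_compat_r (2*M*M+1)) in Hu3; [|nra].
        replace (F t/(2*M*M+1)*(2*M*M+1)) with (F t) in Hu3 by (field; nra). lra. }
      pose proof (Fr (PI/2 - u) ltac:(lra)). pose proof (Mono t (PI/2 - u) ltac:(lra) ltac:(lra) ltac:(lra)).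
      replace (PI/2 - (PI/2 - u)) with u in H by ring.
      pose proof (Rle_abs (F (PI/2-u))). pose proof (Rabs_maj2 (F (PI/2-u))). nra. }
  assert (Ht0' : 0 < t0 < PI/2).
  { destruct Ht0 as [Ha Hb]. split.
    - destruct Ha as [Ha|Ha]; [exact Ha|rewrite <- Ha in Hx0; contradiction].
    - destruct Hb as [Hb|Hb]; [exact Hb|rewrite Hb in Hx0; contradiction]. }
  assert (Hd0 : is_derive F t0 0).
  { apply (is_derive_ext_loc (fun _ => 0)).
    - assert (He : 0 < Rmin t0 (PI/2 - t0)) by (apply Rmin_glb_lt; lra).
      exists (mkposreal _ He). intros y Hy. change (Rabs (y - t0) < Rmin t0 (PI/2 - t0)) in Hy.
      apply Rabs_def2 in Hy. pose proof (Rmin_l t0 (PI/2 - t0)). pose proof (Rmin_r t0 (PI/2 - t0)).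
      symmetry. apply Zero. lra.
    - exact (is_derive_const (K:=R_AbsRing) (0:R) t0). }
  pose proof (is_derive_unique _ _ _ Hd0) as U1.
  pose proof (is_derive_unique _ _ _ (dFt t0 Ht0')) as U2.
  rewrite U1 in U2.
  assert (0 < wf k p t0) by (apply wpos; lra).
  assert (0 < xi t0 ^ 2) by (simpl; rewrite Rmult_1_r; apply Rsqr_pos_lt; exact Hx0).
  pose proof (pow2_ge_0 (Derive xi t0 - c2 rho t0 * xi t0 / (sin t0 * cos t0))).
  assert (0 < - lam * wf k p t0 * xi t0 ^ 2) by (apply Rmult_lt_0_compat; nra).
  assert (0 <= wf k p t0 * (Derive xi t0 - c2 rho t0 * xi t0 / (sin t0 * cos t0)) ^ 2) by nra.
  lra.
Qed.
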